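(* For all integers $m,n\ge 2$, we have $\operatorname{BSR}(m,n)\ge z_2(m,n)\ge z(m,n)$.
   Context: An $m\times n$ biquadratic form is a polynomial $P(\mathbf{x},\mathbf{y})=\sum_{i,k=1}^m\sum_{j,l=1}^n a_{ijkl}x_ix_ky_jy_l$ with real coefficients, $\mathbf{x}\in\mathbb{R}^m$, $\mathbf{y}\in\mathbb{R}^n$. It is SOS if $P=\sum_{p=1}^r f_p^2$ for some bilinear forms $f_p(\mathbf{x},\mathbf{y})=\sum_{i,j}c^{(p)}_{ij}x_iy_j$; the least such $r$ is the SOS rank $\operatorname{sos}(P)$. $\operatorname{BSR}(m,n)$ is the maximum of $\operatorname{sos}(P)$ over all $m\times n$ SOS biquadratic forms $P$. The Zarankiewicz number $z(m,n)$ is the maximum number of edges of a bipartite graph with parts $[m]=\{1,\dots,m\}$ and $[n]$ containing no 4-cycle $C_4$ (equivalently, the maximum size of a set of cells of the $m\times n$ grid containing no four cells $(i,j),(i,l),(k,j),(k,l)$ with $i\ne k$, $j\ne l$). Double Zarankiewicz number: consider configurations $G=([m],[n],E_1\cup E_2)$ where $E_1\subseteq[m]\times[n]$ is a set of 1-edges (cells) and $E_2$ is a set of 2-edges $(i,j;k,l)$ with $i,k\in[m]$, $j,l\in[n]$, $i\ne k$, $j\ne l$; the cells $(i,j)$ and $(k,l)$ are the two halves of this 2-edge. Simplicity condition: the halves of all 2-edges are pairwise distinct cells and none of them belongs to $E_1$. A cell is occupied if it lies in $E_1$ or is a half of some 2-edge. $G$ contains a generalized $C_4$-cycle if (1) there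 are four 1-edges $(i,j),(i,l),(k,j),(k,l)\in E_1$ with $i\ne k$, $j\ne l$; or (2) there is a 2-edge $(i,j;k,l)\in E_2$ whose two opposite cells $(i,l)$ and $(k,j)$ are both occupied; or (3) there are a 2-edge $(i,j;p,q)\in E_2$ and a cell $(k,l)$ such that the five cells $(k,l),(k,j),(k,q),(i,l),(p,l)$ are pairwise distinct and all occupied. $z_2(m,n)$ is the maximum of $|E_1|+|E_2|$ over all such $G$ satisfying the simplicity condition and containing no generalized $C_4$-cycle. *)

(* Defs.v *)
From HB Require Import structures.
From mathcomp Require Import all_boot all_order all_algebra.
From mathcomp Require Import boolp classical_sets reals constructive_ereal ereal.
Set Implicit Arguments. Unset Strict Implicit. Unset Printing Implicit Defensive.
Import Order.TTheory GRing.Theory Num.Theory.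
Local Open Scope ring_scope.
Local Open Scope classical_set_scope.

Section Biquadratic.
Variables (R : realType) (m n : nat).

Definition bq_coeffs := 'I_m -> 'I_n -> 'I_m -> 'I_n -> R.

Definition bq_eval (a : bq_coeffs) (x : 'I_m -> R) (y : 'I_n -> R) : R :=
  \sum_(i < m) \sum_(k < m) \sum_(j < n) \sum_(l < n) a i j k l * x i * x k * y j * y l.

Definition bil_eval (c : 'I_m -> 'I_n -> R) (x : 'I_m -> R) (y : 'I_n -> R) : R :=
  \sum_(i < m) \sum_(j < n) c i j * x i * y j.

(* P is a sum of r squares of bilinear forms (identity of real polynomials,
   checked as identity of polynomial functions on R^m x R^n) *)
Definition sos_with (a : bq_coeffs) (r : nat) : Prop :=
  exists c : 'I_r -> 'I_m -> 'I_n -> R,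
    forall x y, bq_eval a x y = \sum_(p < r) (bil_eval (c p) x y) ^+ 2.

Definition is_sos (a : bq_coeffs) : Prop := exists r, sos_with a r.

(* sos(P) = least r (as an extended real; a natural number whenever P is SOS) *)
Definition sos_rank (a : bq_coeffs) : \bar R :=
  ereal_inf [set (r%:R)%:E | r in [set r | sos_with a r]].

(* BSR(m,n) = max of sos(P) over all m x n SOS biquadratic forms
   (defined as the supremum, which is this maximum) *)
Definition BSR : \bar R := ereal_sup [set sos_rank a | a in [set a | is_sos a]].
End Biquadratic.

Section Zarankiewicz.
Variables (m n : nat).
Definition cell := ('I_m * 'I_n)%type.

Definition has_C4 (E1 : {set cell}) : bool :=
  [exists i : 'I_m, exists k : 'I_m, exists j : 'I_n, exists l : 'I_n,
    [&& i != k, j != l, (i, j) \in E1, (i, l) \in E1, (k, j) \in E1 & (k, l) \in E1]].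

Definition z : nat := \max_(E : {set cell} | ~~ has_C4 E) #|E|.

(* a 2-edge (i,j;k,l) is the ordered pair of its halves ((i,j),(k,l)) with i<>k, j<>l *)
Definition is_2edge (e : cell * cell) : bool := (e.1.1 != e.2.1) && (e.1.2 != e.2.2).

Definition occupied (E1 : {set cell}) (E2 : {set cell * cell}) (c : cell) : bool :=
  (c \in E1) || [exists e in E2, (c == e.1) || (c == e.2)].

Definition simple_conf (E1 : {set cell}) (E2 : {set cell * cell}) : bool :=
  [forall e in E2, [&& is_2edge e, e.1 \notin E1 & e.2 \notin E1]] &&
  [forall e in E2, forall e' in E2,
     (e != e') ==> [&& e.1 != e'.1, e.1 != e'.2, e.2 != e'.1 & e.2 != e'.2]].

Definition has_gen_C4 (E1 : {set cell}) (E2 : {set cell * cell}) : bool :=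
  [|| has_C4 E1,
      (* (2): 2-edge (i,j;k,l) with (i,l) and (k,j) occupied *)
      [exists e in E2,
         occupied E1 E2 (e.1.1, e.2.2) && occupied E1 E2 (e.2.1, e.1.2)]
    | (* (3): 2-edge (i,j;p,q) and cell (k,l) with the five cells
         (k,l),(k,j),(k,q),(i,l),(p,l) pairwise distinct and occupied *)
      [exists e in E2, exists c : cell,
         let: ((i, j), (p, q)) := e in let: (k, l) := c in
         let s := [:: (k, l); (k, j); (k, q); (i, l); (p, l)] in
         uniq s && all (occupied E1 E2) s]].

Definition z2 : nat :=
  \max_(G : {set cell} * {set cell * cell} |
          simple_conf G.1 G.2 && ~~ has_gen_C4 G.1 G.2) (#|G.1| + #|G.2|).
End Zarankiewicz.

(* Main.v *)
Require Import Defs.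
From mathcomp Require Import all_boot all_order all_algebra.
From mathcomp Require Import boolp classical_sets reals constructive_ereal ereal.
From mathcomp Require Import ring lra.
Import Order.TTheory GRing.Theory Num.Theory.
Local Open Scope ring_scope.
Set Implicit Arguments. Unset Strict Implicit. Unset Printing Implicit Defensive.

Section Gen.
Variables (R : realType) (m n : nat).

Definition exv (k : nat) (i i' : 'I_k) : 'I_k -> R := fun t => ((t == i) || (t == i'))%:R.

Lemma sum_ex k (F : 'I_k -> R) i i' :
  \sum_(t < k) exv i i' t * F t = F i + (i' != i)%:R * F i'.
Proof.
rewrite (bigD1 i) //= /exv eqxx /= mul1r; congr (_ + _).
have [->|ne] := eqVneq i' i.
  by rewrite mul0r big1 // => t /negbTE ->; rewrite orbb mul0r.
rewrite (bigD1 i') /=; last by rewrite ne.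
rewrite eqxx orbT mul1r big1 ?addr0 ?mul1r // => t /andP [/negbTE -> /negbTE ->].
by rewrite mul0r.
Qed.

Lemma bil_ex (C : 'I_m -> 'I_n -> R) i k j l :
  bil_eval C (exv i k) (exv j l) =
  (C i j + (l != j)%:R * C i l) + (k != i)%:R * (C k j + (l != j)%:R * C k l).
Proof.
rewrite /bil_eval.
transitivity (\sum_(t < m) exv i k t * (\sum_(s < n) exv j l s * C t s)).
  apply: eq_bigr => t _; rewrite mulr_sumr; apply: eq_bigr => s _.
  ring.
by rewrite sum_ex !sum_ex.
Qed.

Variable I : finType.
Definition Qf (c : I -> 'I_m -> 'I_n -> R) x y := \sum_(p : I) (bil_eval (c p) x y) ^+ 2.
Definition gram (c : I -> 'I_m -> 'I_n -> R) i j k l := \sum_(p : I) c p i j * c p k l.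

Lemma gramC c i j k l : gram c i j k l = gram c k l i j.
Proof. by apply: eq_bigr => p _; rewrite mulrC. Qed.

Lemma Q11 c i j : Qf c (exv i i) (exv j j) = gram c i j i j.
Proof.
apply: eq_bigr => p _; rewrite bil_ex !eqxx /= !mul0r !addr0 expr2 //.
Qed.

Lemma Q12 c i j l : l != j -> Qf c (exv i i) (exv j l) =
  gram c i j i j + gram c i l i l + 2 * gram c i j i l.
Proof.
move=> ne; rewrite /Qf /gram. rewrite big_distrr -!big_split /=.
apply: eq_bigr => p _; rewrite bil_ex ne eqxx /= mul0r addr0 mul1r; ring.
Qed.

Lemma Q21 c i k j : k != i -> Qf c (exv i k) (exv j j) =
  gram c i j i j + gram c k j k j + 2 * gram c i j k j.
Proof.
move=> ne; rewrite /Qf /gram mulr_sumr -!big_split /=.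
apply: eq_bigr => p _; rewrite bil_ex ne eqxx /= !mul0r !addr0 mul1r; ring.
Qed.

Lemma Q22 c i k j l : k != i -> l != j -> Qf c (exv i k) (exv j l) =
  gram c i j i j + gram c i l i l + gram c k j k j + gram c k l k l +
  2 * (gram c i j i l + gram c i j k j + gram c i j k l + gram c i l k j
       + gram c i l k l + gram c k j k l).
Proof.
move=> ne ne'; rewrite /Qf /gram -!big_split /= mulr_sumr -!big_split /=.
apply: eq_bigr => p _; rewrite bil_ex ne ne' /= !mul1r; ring.
Qed.

End Gen.

Section Polar.
Variables (R : realType) (m n : nat) (I J : finType).
Variables (c : I -> 'I_m -> 'I_n -> R) (d : J -> 'I_m -> 'I_n -> R).
Hypothesis E : forall x y, Qf c x y = Qf d x y.

Lemma polar11 i j : gram c i j i j = gram d i j i j.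
Proof. by rewrite -!Q11 E. Qed.

Lemma polar12 i j l : l != j -> gram c i j i l = gram d i j i l.
Proof.
move=> ne; have := E (exv R i i) (exv R j l); rewrite !Q12 // !polar11; lra.
Qed.

Lemma polar21 i k j : k != i -> gram c i j k j = gram d i j k j.
Proof.
move=> ne; have := E (exv R i k) (exv R j j); rewrite !Q21 // !polar11; lra.
Qed.

Lemma polar22 i k j l : k != i -> l != j ->
  gram c i j k l + gram c i l k j = gram d i j k l + gram d i l k j.
Proof.
move=> ne ne'; have := E (exv R i k) (exv R j l).
rewrite !Q22 // !polar11 (polar12 i ne') (polar12 k ne') (polar21 j ne) (polar21 l ne).
lra.
Qed.
End Polar.

Section Comb.
Variables (R : realType) (m n : nat) (E1 : {set cell m n}) (E2 : {set cell m n * cell m n}).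
Hypothesis hs : simple_conf E1 E2.
Hypothesis hg : ~~ has_gen_C4 E1 E2.
Local Notation occ := (occupied E1 E2).

Definition half (u : cell m n) (e : cell m n * cell m n) := (u == e.1) || (u == e.2).
Definition T u v := ((u == v) && (u \in E1)) || [exists e in E2, half u e && half v e].

Lemma s_2edge e : e \in E2 -> (e.1.1 != e.2.1) && (e.1.2 != e.2.2).
Proof. by move: hs => /andP [/forallP h1 _] He; move/implyP: (h1 e) => /(_ He) /and3P []. Qed.

Lemma s_notE1 e : e \in E2 -> (e.1 \notin E1) && (e.2 \notin E1).
Proof. by move: hs => /andP [/forallP h1 _] He; move/implyP: (h1 e) => /(_ He) /and3P [_ -> ->]. Qed.

Lemma s_dist e e' : e \in E2 -> e' \in E2 -> e != e' ->
  [&& e.1 != e'.1, e.1 != e'.2, e.2 != e'.1 & e.2 != e'.2].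
Proof.
move: hs => /andP [_ /forallP h2] He He' ne.
by move/implyP: (h2 e) => /(_ He) /forallP /(_ e') /implyP /(_ He') /implyP /(_ ne).
Qed.

Lemma half_uniq u e e' : e \in E2 -> e' \in E2 -> half u e -> half u e' -> e = e'.
Proof.
move=> He He' hu hu'; apply/eqP; apply: contraT => ne.
have := s_dist He He' ne.
move: hu'; case/orP: hu => /eqP -> /orP [] /eqP ->; by rewrite eqxx /= ?andbF.
Qed.

Lemma occ_half u e : e \in E2 -> half u e -> occ u.
Proof. by move=> He hu; apply/orP; right; apply/existsP; exists e; rewrite He. Qed.

Lemma half_notE1 u e : e \in E2 -> half u e -> u \notin E1.
Proof. by move=> He; have /andP [n1 n2] := s_notE1 He; case/orP => /eqP ->. Qed.

Lemma occ_half_ex u : occ u -> u \notin E1 -> exists2 e, e \in E2 & half u e.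
Proof.
case/orP => [-> //|/existsP [e /andP [He hu]]] _; by exists e.
Qed.

Lemma T_occ u : T u u = occ u.
Proof.
rewrite /T /occupied eqxx /=; congr orb; apply: eq_existsb => e; by rewrite andbb.
Qed.

Lemma T_sym u v : T u v = T v u.
Proof.
rewrite /T [v == u]eq_sym; case: eqP => [->|_] //=.
by apply: eq_existsb => e; rewrite (andbC (half u e)).
Qed.

Lemma T_occl u v : T u v -> occ u.
Proof.
case/orP => [/andP [_ h]|/existsP [e /andP [He /andP [hu _]]]].
  by rewrite /occupied h.
exact: occ_half He hu.
Qed.

Lemma T_occr u v : T u v -> occ v.
Proof. by rewrite T_sym; apply: T_occl. Qed.

Lemma T_half u v e : e \in E2 -> half u e -> half v e -> T u v.
Proof. by move=> He hu hv; apply/orP; right; apply/existsP; exists e; rewrite He hu hv. Qed.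

Lemma T_partner x x' y e : e \in E2 -> half x e -> half x' e -> T x' y -> T x y.
Proof.
move=> He hx hx'; case/orP => [/andP [_ h]|/existsP [f /andP [Hf /andP [h1 h2]]]].
  by have := half_notE1 He hx'; rewrite h.
have ef := half_uniq Hf He h1 hx'; subst f.
exact: T_half He hx h2.
Qed.

Lemma half_pair a b e : half a e -> half b e -> a != b ->
  ((a == e.1) && (b == e.2)) || ((a == e.2) && (b == e.1)).
Proof.
by case/orP => /eqP ->; case/orP => /eqP ->; rewrite ?eqxx ?orbT //.
Qed.

Lemma noC4 : ~~ has_C4 E1.
Proof. by move: hg; rewrite /has_gen_C4 !negb_or => /and3P []. Qed.

Lemma cond2 a b a' b' : ((a, b), (a', b')) \in E2 -> occ (a, b') -> occ (a', b) -> False.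
Proof.
move=> He o1 o2; move: hg; rewrite /has_gen_C4 !negb_or => /and3P [_ h2 _].
by apply: (negP h2); apply/existsP; exists ((a, b), (a', b')); rewrite He /= o1 o2.
Qed.

Lemma cond3 (i : 'I_m) (j : 'I_n) p q k l : ((i, j), (p, q)) \in E2 ->
  uniq [:: (k, l); (k, j); (k, q); (i, l); (p, l)] ->
  all occ [:: (k, l); (k, j); (k, q); (i, l); (p, l)] -> False.
Proof.
move=> He hu ha; move: hg; rewrite /has_gen_C4 !negb_or => /and3P [_ _ h3].
apply: (negP h3); apply/existsP; exists ((i, j), (p, q)); rewrite He.
by apply/existsP; exists (k, l); apply/andP.
Qed.

Lemma cond3' (r1 r2 p : 'I_m) (s1 s2 q : 'I_n) :
  (((r1, s1), (p, q)) \in E2) || (((p, q), (r1, s1)) \in E2) ->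
  r1 != r2 -> s1 != s2 -> p != r1 -> q != s1 -> p != r2 -> q != s2 ->
  occ (r2, s2) -> occ (r2, s1) -> occ (r1, s2) -> occ (p, s2) -> occ (r2, q) -> False.
Proof.
move=> He n1 n2 n3 n4 n5 n6 o1 o2 o3 o4 o5.
have e1 := negbTE n1; have e2 := negbTE n2; have e3 := negbTE n3; have e4 := negbTE n4.
have e5 := negbTE n5; have e6 := negbTE n6.
have f1 : (r2 == r1) = false by rewrite eq_sym.
have f2 : (s2 == s1) = false by rewrite eq_sym.
have f3 : (r1 == p) = false by rewrite eq_sym.
have f4 : (s1 == q) = false by rewrite eq_sym.
have f5 : (r2 == p) = false by rewrite eq_sym.
have f6 : (s2 == q) = false by rewrite eq_sym.
case/orP: He => He.
  apply: (cond3 (k := r2) (l := s2) He).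
    by rewrite /= !inE !xpair_eqE ?eqxx ?e1 ?e2 ?e3 ?e4 ?e5 ?e6 ?f1 ?f2 ?f3 ?f4 ?f5 ?f6 ?andbF ?andFb.
  by rewrite /= o1 o2 o3 o4 o5.
apply: (cond3 (k := r2) (l := s2) He).
  by rewrite /= !inE !xpair_eqE ?eqxx ?e1 ?e2 ?e3 ?e4 ?e5 ?e6 ?f1 ?f2 ?f3 ?f4 ?f5 ?f6 ?andbF ?andFb.
by rewrite /= o1 o2 o3 o4 o5.
Qed.

Variables (r : nat) (c : 'I_r -> 'I_m -> 'I_n -> R).
Definition g (u v : cell m n) := gram c u.1 u.2 v.1 v.2.

Hypothesis Hd : forall u, g u u = (T u u)%:R.
Hypothesis Hr : forall i j l, j != l -> g (i, j) (i, l) = (T (i, j) (i, l))%:R.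
Hypothesis Hc : forall i k j, i != k -> g (i, j) (k, j) = (T (i, j) (k, j))%:R.
Hypothesis Hx : forall i k j l, i != k -> j != l ->
  g (i, j) (k, l) + g (i, l) (k, j) = (T (i, j) (k, l))%:R + (T (i, l) (k, j))%:R.

Lemma gC u v : g u v = g v u.
Proof. exact: gramC. Qed.

Lemma L0 w : ~~ occ w -> forall p, c p w.1 w.2 = 0.
Proof.
move=> hw p; have := Hd w; rewrite T_occ (negbTE hw) /= => h0.
have Hnn : forall i : 'I_r, true -> 0 <= c i w.1 w.2 * c i w.1 w.2.
  by move=> i _; rewrite -expr2 sqr_ge0.
have := @psumr_eq0P _ _ _ _ Hnn h0 p isT.
by move/eqP; rewrite mulf_eq0 orbb => /eqP.
Qed.

Lemma g0l w v : ~~ occ w -> g w v = 0.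
Proof. by move=> hw; apply: big1 => p _; rewrite L0 // mul0r. Qed.

Lemma g0r w v : ~~ occ w -> g v w = 0.
Proof. by move=> hw; rewrite gC g0l. Qed.

Lemma L1 i j k l : ((i, j), (k, l)) \in E2 -> forall p, c p i j = c p k l.
Proof.
move=> He; have /andP [/= n1 n2] := s_2edge He.
have o1 : occ (i, j) by apply: (occ_half He); rewrite /half eqxx.
have o2 : occ (k, l) by apply: (occ_half He); rewrite /half eqxx orbT.
have h12 : g (i, j) (k, l) = 1.
  have := Hx n1 n2.
  rewrite (@T_half (i, j) (k, l) _ He) /half ?eqxx ?orbT //.
  case: (boolP (occ (i, l))) => oil.
    case: (boolP (occ (k, j))) => okj; first by case: (cond2 He oil okj).
    rewrite (@g0r (k, j) (i, l)) // (negbTE (contra (@T_occr _ _) okj)) !addr0 //.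
  rewrite (@g0l (i, l) (k, j)) // (negbTE (contra (@T_occl _ _) oil)) !addr0 //.
have hs0 : \sum_p (c p i j - c p k l) ^+ 2 = 0.
  have -> : \sum_p (c p i j - c p k l) ^+ 2 =
            g (i, j) (i, j) + g (k, l) (k, l) - 2 * g (i, j) (k, l).
    rewrite /g /gram /= mulr_sumr -big_split /= -sumrB.
    by apply: eq_bigr => p _; ring.
  rewrite h12 !Hd !T_occ o1 o2 /=; ring.
have Hnn : forall t : 'I_r, true -> 0 <= (c t i j - c t k l) ^+ 2.
  by move=> t _; rewrite sqr_ge0.
move=> p; have := @psumr_eq0P _ _ _ _ Hnn hs0 p isT.
by move/eqP; rewrite sqrf_eq0 subr_eq0 => /eqP.
Qed.

Lemma Lh u e : e \in E2 -> half u e -> forall p, c p u.1 u.2 = c p e.1.1 e.1.2.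
Proof.
case: e => [[i j] [k l]] He /=; case/orP => /eqP -> p //=.
by rewrite (L1 He).
Qed.

Lemma Key (r1 r2 p : 'I_m) (s1 s2 q : 'I_n) :
  (((r1, s1), (p, q)) \in E2) || (((p, q), (r1, s1)) \in E2) ->
  r1 != r2 -> s1 != s2 ->
  occ (r1, s2) -> occ (r2, s1) -> occ (r2, s2) -> ~~ T (r1, s1) (r2, s2) ->
  g (r1, s1) (r2, s2) = 0.
Proof.
move=> He n1 n2 o12 o21 o22 nT.
have [e [He' hx hx' pr /andP [ne1 ne2]]] : exists e, [/\ e \in E2, half (r1, s1) e, half (p, q) e,
     forall t, c t r1 s1 = c t p q & (p != r1) && (q != s1)].
  case/orP: He => He.
    exists ((r1, s1), (p, q)); split => //; rewrite /half ?eqxx ?orbT //.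
      exact: L1 He.
    by have /andP [/= a b] := s_2edge He; rewrite eq_sym a eq_sym b.
  exists ((p, q), (r1, s1)); split => //; rewrite /half ?eqxx ?orbT //.
    by move=> t; rewrite (L1 He).
  by have /andP [/= a b] := s_2edge He; rewrite a b.
have nT' : ~~ T (p, q) (r2, s2) by apply: contra nT; apply: T_partner He' hx hx'.
have -> : g (r1, s1) (r2, s2) = g (p, q) (r2, s2).
  by apply: eq_bigr => t _ /=; rewrite pr.
have [epr|npr] := eqVneq p r2.
  subst p; have [eqs|nqs] := eqVneq q s2.
    by subst q; rewrite T_occ o22 in nT'.
  by rewrite Hr // (negbTE nT').
have [eqs|nqs] := eqVneq q s2.
  by subst q; rewrite Hc // (negbTE nT').
have := Hx npr nqs; rewrite (negbTE nT') add0r.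
case: (boolP (occ (p, s2))) => o1.
  case: (boolP (occ (r2, q))) => o2.
    by case: (cond3' He n1 n2 ne1 ne2 npr nqs o22 o21 o12 o1 o2).
  by rewrite (@g0r (r2, q) (p, s2)) // (negbTE (contra (@T_occr _ _) o2)) addr0.
by rewrite (@g0l (p, s2) (r2, q)) // (negbTE (contra (@T_occl _ _) o1)) addr0.
Qed.

Lemma Key2 (r1 r2 : 'I_m) (s1 s2 : 'I_n) e :
  e \in E2 -> half (r1, s1) e ->
  r1 != r2 -> s1 != s2 ->
  occ (r1, s2) -> occ (r2, s1) -> occ (r2, s2) -> ~~ T (r1, s1) (r2, s2) ->
  g (r1, s1) (r2, s2) = 0.
Proof.
case: e => [[a b] [a' b']] He; case/orP => /eqP [-> ->].
  by apply: (@Key _ _ a' _ _ b'); rewrite He.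
by apply: (@Key _ _ a _ _ b); rewrite He orbT.
Qed.

Lemma gT u v : g u v = (T u v)%:R.
Proof.
case: u v => [i j] [k l].
case: (boolP (occ (i, j))) => ou; last by rewrite g0l // (negbTE (contra (@T_occl _ _) ou)).
case: (boolP (occ (k, l))) => ov; last by rewrite g0r // (negbTE (contra (@T_occr _ _) ov)).
case: (boolP (T (i, j) (k, l))) => tuv.
  case/orP: (tuv) => [/andP [/eqP <- _] | /existsP [e /andP [He /andP [h1 h2]]]].
    by rewrite Hd T_occ ou.
  have -> : g (i, j) (k, l) = g e.1 e.1.
    by apply: eq_bigr => p _; rewrite (Lh He h1) (Lh He h2).
  by rewrite Hd T_occ (@occ_half _ e) // /half eqxx.
have [eik|nik] := eqVneq i k.
  subst k; have [ejl|njl] := eqVneq j l.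
    by subst l; rewrite T_occ ou in tuv.
  by rewrite Hr // (negbTE tuv).
have [ejl|njl] := eqVneq j l.
  by subst l; rewrite Hc // (negbTE tuv).
have tab : ~~ T (i, l) (k, j).
  apply/negP; case/orP => [/andP [/eqP [eik _] _]|/existsP [e /andP [He /andP [h1 h2]]]].
    by rewrite eik eqxx in nik.
  have ne : (i, l) != (k, j) by rewrite xpair_eqE negb_and nik.
  move: He h1 h2; case: e => [[a b] [a' b']] He h1 h2.
  case/orP: (half_pair h1 h2 ne) => /andP [/eqP [e1 e2] /eqP [e3 e4]]; subst.
    exact: (cond2 He ou ov).
  exact: (cond2 He ov ou).
have := Hx nik njl; rewrite (negbTE tuv) (negbTE tab) addr0 => h.
case: (boolP (occ (i, l))) => oil; last by rewrite (@g0l (i, l) (k, j)) // addr0 in h.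
case: (boolP (occ (k, j))) => okj; last by rewrite (@g0r (k, j) (i, l)) // addr0 in h.
have nik' : k != i by rewrite eq_sym.
have njl' : l != j by rewrite eq_sym.
case: (boolP ((i, j) \in E1)) => a1; last first.
  have [e He hh] := occ_half_ex ou a1.
  exact: (Key2 He hh nik njl oil okj ov tuv).
case: (boolP ((k, l) \in E1)) => a2; last first.
  have [e He hh] := occ_half_ex ov a2.
  by rewrite gC; apply: (Key2 He hh nik' njl' okj oil ou); rewrite T_sym.
case: (boolP ((i, l) \in E1)) => a3; last first.
  have [e He hh] := occ_half_ex oil a3.
  by rewrite (Key2 He hh nik njl' ou ov okj tab) addr0 in h.
case: (boolP ((k, j) \in E1)) => a4; last first.
  have [e He hh] := occ_half_ex okj a4.
  have h0 : g (k, j) (i, l) = 0 by apply: (Key2 He hh nik' njl ov ou oil); rewrite T_sym.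
  by rewrite (gC (i, l)) h0 addr0 in h.
case/negP: noC4; apply/existsP; exists i; apply/existsP; exists k.
apply/existsP; exists j; apply/existsP; exists l.
by rewrite nik njl a1 a2 a3 a4.
Qed.
End Comb.

Lemma bq_gram (R : realType) (m n : nat) (I : finType) (c : I -> 'I_m -> 'I_n -> R) x y :
  bq_eval (fun i j k l => gram c i j k l) x y = Qf c x y.
Proof.
rewrite /bq_eval /Qf.
transitivity (\sum_(i < m) \sum_(k < m) \sum_(j < n) \sum_(l < n) \sum_(p : I)
   (c p i j * x i * y j) * (c p k l * x k * y l)).
  apply: eq_bigr => i _; apply: eq_bigr => k _; apply: eq_bigr => j _; apply: eq_bigr => l _.
  rewrite /gram !mulr_suml; apply: eq_bigr => p _; ring.
transitivity (\sum_(p : I) \sum_(i < m) \sum_(k < m) \sum_(j < n) \sum_(l < n)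
   (c p i j * x i * y j) * (c p k l * x k * y l)); last first.
  apply: eq_bigr => p _; rewrite expr2 /bil_eval big_distrlr; apply: eq_bigr => i _.
  apply: eq_bigr => k _; by rewrite big_distrlr.
rewrite [RHS]exchange_big; apply: eq_bigr => i _.
rewrite [RHS]exchange_big; apply: eq_bigr => k _.
rewrite [RHS]exchange_big; apply: eq_bigr => j _.
by rewrite [RHS]exchange_big.
Qed.

Lemma sum_atmost1 (R : realType) (X : finType) (P : pred X) :
  (forall x y, P x -> P y -> x = y) -> \sum_(x : X) ((P x)%:R : R) = ([exists x, P x])%:R.
Proof.
move=> H; case: (boolP [exists x, P x]) => [/existsP [x0 Px0]|/existsPn hn].
  rewrite (bigD1 x0) //= Px0 big1 ?addr0 // => x ne.
  case: (boolP (P x)) => // Px; by rewrite (H _ _ Px Px0) eqxx in ne.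
by rewrite big1 // => x _; rewrite (negbTE (hn x)).
Qed.

Section Build.
Variables (R : realType) (m n : nat) (E1 : {set cell m n}) (E2 : {set cell m n * cell m n}).
Hypothesis hs : simple_conf E1 E2.
Hypothesis hg : ~~ has_gen_C4 E1 E2.
Local Notation occ := (occupied E1 E2).

Definition Ity := (cell m n + (cell m n * cell m n))%type.
Definition dd (s : Ity) (i : 'I_m) (j : 'I_n) : R :=
  match s with
  | inl x => ((x \in E1) && ((i, j) == x))%:R
  | inr e => ((e \in E2) && half (i, j) e)%:R
  end.

Lemma gd_T u v : gram dd u.1 u.2 v.1 v.2 = (T E1 E2 u v)%:R.
Proof.
case: u v => [i j] [k l] /=; rewrite /gram big_sumType /=.
have e1 : \sum_(x : cell m n) dd (inl x) i j * dd (inl x) k l =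
          (((i, j) == (k, l)) && ((i, j) \in E1))%:R.
  rewrite (eq_bigr (fun x => (((x \in E1) && ((i, j) == x)) && ((x \in E1) && ((k, l) == x)))%:R)); last first.
    by move=> x _; rewrite /dd -natrM mulnb.
  rewrite sum_atmost1; last by move=> x y /andP [/andP [_ /eqP <-] _] /andP [/andP [_ /eqP <-] _].
  congr (_ %:R); congr (nat_of_bool _); apply/idP/idP => [/existsP [x /andP [/andP [h1 /eqP e] /andP [_ /eqP e']]]|/andP [/eqP e h]].
    by subst x; rewrite e' eqxx h1.
  by apply/existsP; exists (i, j); rewrite h eqxx /= -e eqxx.
have e2 : \sum_(e : cell m n * cell m n) dd (inr e) i j * dd (inr e) k l =
          ([exists e in E2, half (i, j) e && half (k, l) e])%:R.
  rewrite (eq_bigr (fun e => (((e \in E2) && half (i, j) e) && ((e \in E2) && half (k, l) e))%:R)); last first.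
    by move=> x _; rewrite /dd -natrM mulnb.
  rewrite sum_atmost1; last first.
    by move=> x y /andP [/andP [Hx hx] _] /andP [/andP [Hy hy] _]; apply: (half_uniq hs Hx Hy hx hy).
  congr (_ %:R); congr (nat_of_bool _); apply: eq_existsb => e.
  by rewrite andbACA andbb andbA.
rewrite e1 e2 /T.
case: (boolP ((i, j) \in E1)) => h; last by rewrite andbF add0r.
have -> : [exists e in E2, half (i, j) e && half (k, l) e] = false.
  case: existsP => // -[e /andP [He /andP [hh _]]].
  by have := half_notE1 hs He hh; rewrite h.
by rewrite addr0 orbF.
Qed.

Definition aa : bq_coeffs R m n := fun i j k l => gram dd i j k l.

Lemma aa_sos : is_sos aa.
Proof.
exists #|[pred s : Ity | true]|; exists (fun p => dd (enum_val p)) => x y.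
rewrite bq_gram /Qf; exact: (big_enum_val (A := [pred s : Ity | true])).
Qed.

Definition Sel := E1 :|: [set e.1 | e in E2].

Lemma card_Sel : #|Sel| = (#|E1| + #|E2|)%N.
Proof.
rewrite /Sel cardsU card_in_imset; last first.
  move=> e e' He He' /= h; apply: (half_uniq (u := e.1) hs He He'); rewrite /half ?eqxx //.
  by rewrite h eqxx.
have -> : E1 :&: [set e.1 | e in E2] = finset.set0.
  apply/setP => u; rewrite !inE; apply/negP => /andP [h /imsetP [e He eu]]; subst u.
  by have := half_notE1 hs He (u := e.1); rewrite /half eqxx h => /(_ isT).
by rewrite cards0 subn0.
Qed.

Lemma T_Sel x y : x \in Sel -> y \in Sel -> T E1 E2 x y = (x == y).
Proof.
move=> hx hy; have [<-|ne] := eqVneq x y.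
  rewrite T_occ; move: hx; rewrite /Sel inE => /orP [h|/imsetP [e He ->]].
    by rewrite /occupied h.
  by apply/orP; right; apply/existsP; exists e; rewrite He /= eqxx.
rewrite /T (negbTE ne) /=; case: existsP => // -[e /andP [He /andP [h1 h2]]].
have get : forall w, w \in Sel -> half w e -> w = e.1.
  move=> w; rewrite /Sel inE => /orP [h|/imsetP [f Hf ->]] hw.
    by have := half_notE1 hs He hw; rewrite h.
  have := half_uniq hs Hf He (u := f.1); rewrite /half eqxx => /(_ isT hw) ->.
  by [].
by move: ne; rewrite (get _ hx h1) (get _ hy h2) eqxx.
Qed.

Lemma rank_bound r (c : 'I_r -> 'I_m -> 'I_n -> R) :
  (forall x y, Qf c x y = Qf dd x y) -> (#|E1| + #|E2| <= r)%N.
Proof.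
move=> E.
have Hg : forall u v, g c u v = (T E1 E2 u v)%:R.
  apply: (gT hs hg).
  - by move=> [i j]; rewrite /g /= (polar11 E) -(gd_T (i, j) (i, j)).
  - by move=> i j l ne; rewrite /g /= (polar12 E) ?(eq_sym l) // -(gd_T (i, j) (i, l)).
  - by move=> i k j ne; rewrite /g /= (polar21 E) ?(eq_sym k) // -(gd_T (i, j) (k, j)).
  - move=> i k j l ne ne'; rewrite /g /= (polar22 E) ?(eq_sym k) ?(eq_sym l) //.
    by rewrite -(gd_T (i, j) (k, l)) -(gd_T (i, l) (k, j)).
pose M : 'M[R]_(#|Sel|, r) := \matrix_(p, t) c t (enum_val p).1 (enum_val p).2.
have HM : M *m M^T = 1%:M.
  apply/matrixP => p p'; rewrite !mxE.
  transitivity (g c (enum_val p) (enum_val p')).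
    by apply: eq_bigr => t _; rewrite !mxE.
  by rewrite Hg T_Sel ?enum_valP // (inj_eq enum_val_inj).
rewrite -card_Sel.
have := mxrankM_maxl M M^T; rewrite HM mxrank1 => h.
exact: leq_trans h (rank_leq_col M).
Qed.

Lemma conf_bound : (((#|E1| + #|E2|)%N%:R)%:E <= BSR R m n)%E.
Proof.
apply: (@le_trans _ _ (sos_rank aa)); last first.
  by apply: ereal_sup_ubound; exists aa => //; exact: aa_sos.
apply/ereal_infP => y [r [c hc] <-].
rewrite lee_fin ler_nat; apply: (rank_bound (c := c)) => x y'.
transitivity (bq_eval aa x y'); first by rewrite hc.
exact: bq_gram.
Qed.
End Build.

Unset Implicit Arguments.

Theorem theorem2p2 (R : realType) (m n : nat) (hm : (2 <= m)%N) (hn : (2 <= n)%N) :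
  (((z2 m n)%:R)%:E <= BSR R m n)%E /\ (z m n <= z2 m n)%N.
Proof.
have simple0 : forall E : {set cell m n}, simple_conf E finset.set0.
  by move=> E; apply/andP; split; apply/forallP => e; rewrite inE.
have gen0 : forall E : {set cell m n}, has_gen_C4 E finset.set0 = has_C4 E.
  move=> E; rewrite /has_gen_C4.
  have -> : [exists e in finset.set0, occupied E finset.set0 (e.1.1, e.2.2) &&
             occupied E finset.set0 (e.2.1, e.1.2)] = false.
    by apply/existsP => -[e]; rewrite inE.
  set b := [exists e in _, _]; have -> : b = false.
    by rewrite /b; apply/existsP => -[e]; rewrite inE.
  by rewrite !orbF.
split.
  pose P := [pred G : {set cell m n} * {set cell m n * cell m n} |
               simple_conf G.1 G.2 && ~~ has_gen_C4 G.1 G.2].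
  have P0 : (0 < #|P|)%N.
    apply/card_gt0P; exists (finset.set0, finset.set0).
    rewrite inE /= simple0 gen0 /has_C4; apply/existsPn => i.
    apply/existsPn => k; apply/existsPn => j; apply/existsPn => l.
    by rewrite inE andFb !andbF.
  have -> : z2 m n = \max_(i in P) (#|i.1| + #|i.2|)%N by [].
  have [G HG ->] := eq_bigmax_cond (fun G : {set cell m n} * {set cell m n * cell m n} =>
                                      (#|G.1| + #|G.2|)%N) P0.
  move: HG; rewrite inE => /andP [h1 h2].
  exact: conf_bound h1 h2.
apply/bigmax_leqP => E hE.
apply: (@leq_trans (#|E| + #|(finset.set0 : {set cell m n * cell m n})|)%N).
  by rewrite cards0 addn0.
apply: (@leq_bigmax_cond _ _ (fun G : {set cell m n} * {set cell m n * cell m n} =>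
                                 (#|G.1| + #|G.2|)%N) (E, finset.set0)).
by rewrite /= simple0 gen0 hE.
Qed.
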